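(* Let $M,N,Q$ be positive integers with $N\le M$, let $S=\{\vec b\in\mathbb{F}_2^M: H(\vec b)=N\}$, let $\mathbf{G}\in\mathbb{F}_2^{Q\times M}$ be such that $\vec b\mapsto\mathbf{G}\vec b$ is injective on $S$, let $\vec a,\vec c\in\mathbb{F}_2^M$, and let $T\subseteq S$. Define the operators on $(\mathbb{C}^2)^{\otimes Q}$ $$A_{\pm}=X^{\mathbf{G}\vec a}\sum_{\vec b\in T}(-1)^{\vec c\cdot\vec b}\left(P^{\mathbf{G}\vec b}\pm P^{\mathbf{G}(\vec a\oplus\vec b)}\right).$$ Then each of $A_+$ and $A_-$ is a linear combination of pairwise commuting Pauli strings (elements of $\{I,X,Y,Z\}^{\otimes Q}$); in particular each can be measured in a single (Clifford) measurement basis.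
   Context: For $\vec v\in\mathbb{F}_2^Q$: $X^{\vec v}=\prod_{m=1}^Q\sigma_{x,m}^{\vec v[m]}$ (so $X^{\vec v}|\vec u\rangle=|\vec u\oplus\vec v\rangle$), and $P^{\vec v}=\prod_{m=1}^Q\frac{1+(-1)^{\vec v[m]}\sigma_{z,m}}{2}=|\vec v\rangle\langle\vec v|$ is the projector onto the computational basis state $|\vec v\rangle$. $H(\cdot)$ is Hamming weight, $\oplus$ is bitwise addition mod 2 and $\vec c\cdot\vec b$ is the mod-2 inner product. The operators $A_\pm$ are the (anti-)Hermitian parts (up to a factor) of a linearly encoded fermionic operator $\mathcal{E}(\hat O)=X^{\mathbf{G}\vec a}\sum_{\vec b\in T}(-1)^{\vec c\cdot\vec b}P^{\mathbf{G}\vec b}$. *)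

(* Defs.v *)
(* Operators on (C^2)^{\otimes Q} are square complex matrices
   (complex numbers = algC) indexed by computational basis states
   |u>, u in F_2^Q (= 'cV['F_2]_Q), via enum_val. *)
From HB Require Import structures.
From mathcomp Require Import all_boot all_order all_algebra all_field.
Set Implicit Arguments. Unset Strict Implicit. Unset Printing Implicit Defensive.
Import Order.TTheory GRing.Theory Num.Theory.
Local Open Scope ring_scope.

Inductive pauli := PI | PX | PY | PZ.

Definition dimQ (Q : nat) : nat := #|{: 'cV['F_2]_Q}|.
Definition op (Q : nat) := 'M[algC]_(dimQ Q).

Definition ket (Q : nat) (i : 'I_(dimQ Q)) : 'cV['F_2]_Q := enum_val i.

(* matrix entry <v| sigma |u> of a single-qubit Pauli *)
Definition pauli1 (p : pauli) (v u : 'F_2) : algC :=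
  match p with
  | PI => (v == u)%:R
  | PX => (v != u)%:R
  | PZ => if v == u then (if u == 0 then 1 else -1) else 0
  | PY => if v == u then 0 else (if u == 0 then 'i else - 'i)
  end.

Definition pauli_string_mx (Q : nat) (p : 'I_Q -> pauli) : op Q :=
  \matrix_(i, j) \prod_(m < Q) pauli1 (p m) (ket i m ord0) (ket j m ord0).

Definition Xop (Q : nat) (v : 'cV['F_2]_Q) : op Q :=
  \matrix_(i, j) (ket i == ket j + v)%:R.

Definition Proj (Q : nat) (v : 'cV['F_2]_Q) : op Q :=
  \matrix_(i, j) ((ket i == v) && (ket j == v))%:R.

Definition hamming (M : nat) (b : 'cV['F_2]_M) : nat := #|[set i | b i ord0 != 0]|.

Definition weight_set (M N : nat) : {set 'cV['F_2]_M} :=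
  [set b | hamming b == N].

Definition dot2 (M : nat) (c b : 'cV['F_2]_M) : 'F_2 := (c^T *m b) ord0 ord0.

Definition sgn2 (x : 'F_2) : algC := if x == 0 then 1 else -1.

Definition Apm (Q M : nat) (s : bool) (G : 'M['F_2]_(Q, M))
    (a c : 'cV['F_2]_M) (T : {set 'cV['F_2]_M}) : op Q :=
  Xop (G *m a) *m
    \sum_(b in T) (sgn2 (dot2 c b) *:
        (Proj (G *m b) + (if s then 1 else -1) *: Proj (G *m (a + b)))).

Definition commuting_pauli_comb (Q : nat) (A : op Q) : Prop :=
  exists (k : nat) (p : 'I_k -> 'I_Q -> pauli) (coef : 'I_k -> algC),
    (forall i j : 'I_k,
        pauli_string_mx (p i) *m pauli_string_mx (p j)
        = pauli_string_mx (p j) *m pauli_string_mx (p i))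
    /\ A = \sum_(i < k) coef i *: pauli_string_mx (p i).

(* Main.v *)
Require Import Defs.
From HB Require Import structures.
From mathcomp Require Import all_boot all_order all_algebra all_field.
From mathcomp Require Import ring.
Import Order.TTheory GRing.Theory Num.Theory.
Local Open Scope ring_scope.
Set Implicit Arguments. Unset Strict Implicit.

Lemma F2_cases (x : 'F_2) : x = 0 \/ x = 1.
Proof. case: x => [[|[|n]] Hn]; [left|right|]; try exact: val_inj. by []. Qed.
Definition letter (vm zm : 'F_2) : pauli :=
  if vm == 0 then (if zm == 0 then PI else PZ) else (if zm == 0 then PX else PY).
Definition alpha1 (vm zm : 'F_2) : algC := if (vm != 0) && (zm != 0) then 'i else 1.
Lemma pauli1E vm zm xm ym : pauli1 (letter vm zm) xm ym =
  (xm == ym + vm)%:R * alpha1 vm zm * sgn2 (zm * ym).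
Proof.
case: (F2_cases vm) => ->; case: (F2_cases zm) => ->; case: (F2_cases xm) => ->;
  case: (F2_cases ym) => ->; rewrite /alpha1 /sgn2 /=.
all: by rewrite ?mulr1 ?mul1r ?mulrN ?mulr0 ?mul0r ?mulN1r ?oppr0 ?mulr1.
Qed.
Lemma sgn2D x y : sgn2 (x + y) = sgn2 x * sgn2 y.
Proof. by case: (F2_cases x) => ->; case: (F2_cases y) => ->; rewrite /sgn2 /= ?mulN1r ?opprK ?mul1r. Qed.
Lemma sgn2_0 : sgn2 0 = 1. Proof. by rewrite /sgn2 eqxx. Qed.
Lemma F2_opp (x : 'F_2) : - x = x.
Proof. by case: (F2_cases x) => ->; [rewrite oppr0 | apply: val_inj]. Qed.
Lemma opp_cv Q (u : 'cV['F_2]_Q) : - u = u.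
Proof. by apply/matrixP => i j; rewrite mxE F2_opp. Qed.
Lemma addvv2 Q (u : 'cV['F_2]_Q) : u + u = 0.
Proof. by rewrite -{1}(opp_cv u) addNr. Qed.

Lemma dot2E Q (z u : 'cV['F_2]_Q) : dot2 z u = \sum_m z m ord0 * u m ord0.
Proof. by rewrite /dot2 mxE; apply: eq_bigr => m _; rewrite mxE. Qed.
Lemma dot2Dr Q (z x y : 'cV['F_2]_Q) : dot2 z (x + y) = dot2 z x + dot2 z y.
Proof. by rewrite /dot2 mulmxDr mxE. Qed.
Lemma dot2Dl Q (z x y : 'cV['F_2]_Q) : dot2 (x + y) z = dot2 x z + dot2 y z.
Proof. by rewrite !dot2E -big_split; apply: eq_bigr => m _; rewrite mxE mulrDl. Qed.
Lemma dot2_0 Q (z : 'cV['F_2]_Q) : dot2 z 0 = 0.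
Proof. by rewrite /dot2 mulmx0 mxE. Qed.

Lemma sgn2_sum Q (z u : 'cV['F_2]_Q) :
  \prod_m sgn2 (z m ord0 * u m ord0) = sgn2 (dot2 z u).
Proof. by rewrite dot2E (big_morph sgn2 sgn2D sgn2_0). Qed.

Lemma prod_eq Q (x y : 'cV['F_2]_Q) :
  \prod_m (x m ord0 == y m ord0)%:R = (x == y)%:R :> algC.
Proof.
have [->|ne] := eqVneq x y; first by rewrite big1 // => m _; rewrite eqxx.
have: ~~ [forall m, x m ord0 == y m ord0].
  apply: contra ne => /forallP H; apply/eqP/matrixP => i j.
  by rewrite (ord1 j); apply/eqP.
rewrite negb_forall => /existsP [m Hm].
by rewrite (bigD1 m) //= (negbTE Hm) mul0r.
Qed.

Lemma ket_eq Q (i j : 'I_(dimQ Q)) : (ket i == ket j) = (i == j).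
Proof. by rewrite /ket (inj_eq enum_val_inj). Qed.

Lemma sum_ket Q (F : 'cV['F_2]_Q -> algC) :
  \sum_(l < dimQ Q) F (ket l) = \sum_u F u.
Proof.
rewrite (reindex (@ket Q)) //; exists (@enum_rank _) => l _.
  exact: enum_valK.
exact: enum_rankK.
Qed.

Lemma sum_sgn Q (u : 'cV['F_2]_Q) :
  \sum_(z : 'cV['F_2]_Q) sgn2 (dot2 z u) = (u == 0)%:R * (dimQ Q)%:R.
Proof.
have [->|nz] := eqVneq u 0.
  rewrite mul1r (eq_bigr (fun _ => 1)) => [|z _]; last by rewrite dot2_0.
  by rewrite sumr_const.
rewrite mul0r.
have: ~~ [forall m, u m ord0 == 0].
  apply: contra nz => /forallP H; apply/eqP/matrixP => i j.
  by rewrite (ord1 j) mxE; apply/eqP.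
rewrite negb_forall => /existsP [j Hj].
set e : 'cV['F_2]_Q := delta_mx j ord0.
have He z : sgn2 (dot2 (z + e) u) = - sgn2 (dot2 z u).
  rewrite dot2Dl sgn2D.
  have -> : dot2 e u = 1.
    rewrite dot2E (bigD1 j) //= big1 => [|m nm]; last by rewrite mxE (negbTE nm) mul0r.
    rewrite mxE !eqxx addr0 mul1r.
    by case: (F2_cases (u j ord0)) Hj => ->.
  by rewrite mulrN1.
set S := \sum_z _.
have HS : S = - S.
  rewrite {1}/S (reindex_inj (addIr e)) /=.
  by rewrite -sumrN; apply: eq_bigr => z _; rewrite He.
have: S *+ 2 == 0 by rewrite mulr2n {1}HS addNr.
by rewrite mulrn_eq0 => /eqP.
Qed.

Definition alpha Q (v z : 'cV['F_2]_Q) : algC :=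
  \prod_(m < Q) alpha1 (v m ord0) (z m ord0).
Definition strv Q (v z : 'cV['F_2]_Q) : 'I_Q -> pauli :=
  fun m => letter (v m ord0) (z m ord0).

Lemma string_entry Q (p : 'I_Q -> pauli) (v z : 'cV['F_2]_Q) :
  (forall m, p m = letter (v m ord0) (z m ord0)) -> forall i j,
  pauli_string_mx p i j = (ket i == ket j + v)%:R * alpha v z * sgn2 (dot2 z (ket j)).
Proof.
move=> Hp i j; rewrite mxE.
rewrite (eq_bigr (fun m => (ket i m ord0 == (ket j + v) m ord0)%:R * alpha1 (v m ord0) (z m ord0)
   * sgn2 (z m ord0 * ket j m ord0))); last by move=> m _; rewrite Hp pauli1E mxE.
by rewrite !big_split /= prod_eq sgn2_sum.
Qed.

Lemma alpha_neq0 Q (v z : 'cV['F_2]_Q) : alpha v z != 0.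
Proof.
rewrite /alpha; apply/prodf_neq0 => m _; rewrite /alpha1; case: ifP => _.
  by rewrite neq0Ci.
exact: oner_neq0.
Qed.

Lemma id_string Q : pauli_string_mx (fun _ : 'I_Q => PI) = 1%:M.
Proof.
apply/matrixP => i j.
rewrite (@string_entry Q _ 0 0) => [|m]; last by rewrite mxE.
rewrite !mxE addr0 ket_eq /alpha big1 => [|m _]; last by rewrite !mxE.
have -> : dot2 0 (ket j) = 0 by rewrite /dot2 trmx0 mul0mx mxE.
by rewrite sgn2_0 !mulr1.
Qed.

Lemma prod_entry Q (v z z' : 'cV['F_2]_Q) i j :
  (pauli_string_mx (strv v z) *m pauli_string_mx (strv v z')) i j =
  (i == j)%:R * alpha v z * alpha v z' * sgn2 (dot2 z (ket j + v)) * sgn2 (dot2 z' (ket j)).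
Proof.
rewrite mxE.
under eq_bigr => t _ do rewrite (@string_entry Q _ v z) // (@string_entry Q _ v z') //.
rewrite (sum_ket (fun u => (ket i == u + v)%:R * alpha v z * sgn2 (dot2 z u) *
   ((u == ket j + v)%:R * alpha v z' * sgn2 (dot2 z' (ket j))))).
rewrite (bigD1 (ket j + v)) //= big1 => [|u nu]; last by rewrite (negbTE nu) !mul0r mulr0.
rewrite eqxx -addrA addvv2 !addr0 ket_eq mul1r; ring.
Qed.

Lemma proj_and Q (t j : 'I_(dimQ Q)) (w : 'cV['F_2]_Q) :
  ((ket t == w) && (ket j == w))%:R = (t == j)%:R * (ket j == w)%:R :> algC.
Proof.
have [->|ne] := eqVneq t j; first by rewrite andbb mul1r.
rewrite mul0r; case: (ket t =P w) => //= Ht; case: (ket j =P w) => //= Hj.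
by move: ne; rewrite -ket_eq Ht Hj eqxx.
Qed.

Definition fA Q M (s : bool) (G : 'M['F_2]_(Q, M)) (a c : 'cV['F_2]_M)
  (T : {set 'cV['F_2]_M}) (y : 'cV['F_2]_Q) : algC :=
  \sum_(b in T) sgn2 (dot2 c b) * ((y == G *m b)%:R
     + (if s then 1 else -1) * (y == G *m a + G *m b)%:R).

Lemma Apm_entry Q M s (G : 'M['F_2]_(Q, M)) a c T i j :
  Apm s G a c T i j = (ket i == ket j + G *m a)%:R * fA s G a c T (ket j).
Proof.
rewrite /Apm mxE.
have Hin t : (\sum_(b in T) (sgn2 (dot2 c b) *:
        (Proj (G *m b) + (if s then 1 else -1) *: Proj (G *m (a + b))))) t j
     = (t == j)%:R * fA s G a c T (ket j).
  rewrite summxE /fA mulr_sumr; apply: eq_bigr => b _.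
  by rewrite !mxE mulmxDr !proj_and; ring.
under eq_bigr => t _ do rewrite Hin.
rewrite (bigD1 j) //= big1 => [|t nt]; last by rewrite (negbTE nt) mul0r mulr0.
by rewrite eqxx mul1r addr0 mxE.
Qed.

Definition fh Q M (s : bool) (G : 'M['F_2]_(Q, M)) (a c : 'cV['F_2]_M)
  (T : {set 'cV['F_2]_M}) (z : 'cV['F_2]_Q) : algC :=
  (dimQ Q)%:R^-1 * \sum_(b in T) (sgn2 (dot2 c b) * sgn2 (dot2 z (G *m b)) *
     (1 + (if s then 1 else -1) * sgn2 (dot2 z (G *m a)))).

Lemma n_neq0 Q : (dimQ Q)%:R != 0 :> algC.
Proof. by rewrite pnatr_eq0 -lt0n; apply/card_gt0P; exists 0. Qed.

Lemma eq0_add Q (x y : 'cV['F_2]_Q) : (x + y == 0) = (x == y).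
Proof. by rewrite addr_eq0 opp_cv. Qed.

Lemma fourier Q M s (G : 'M['F_2]_(Q, M)) a c T y :
  fA s G a c T y = \sum_z fh s G a c T z * sgn2 (dot2 z y).
Proof.
rewrite /fh.
under eq_bigr => z _ do rewrite -mulrA mulr_suml.
rewrite -mulr_sumr exchange_big /= /fA mulr_sumr; apply: eq_bigr => b _.
set sb := sgn2 (dot2 c b); set sg := (if s then 1 else -1 : algC).
rewrite (eq_bigr (fun z => sb * (sgn2 (dot2 z (y + G *m b)) +
     sg * sgn2 (dot2 z (y + (G *m a + G *m b)))))); last first.
  by move=> z _; rewrite !dot2Dr !sgn2D; ring.
rewrite -mulr_sumr big_split /= -mulr_sumr !sum_sgn !eq0_add.
have := n_neq0 Q; set n := (dimQ Q)%:R => Hn.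
have -> : sb * ((y == G *m b)%:R * n + sg * ((y == G *m a + G *m b)%:R * n))
   = sb * ((y == G *m b)%:R + sg * (y == G *m a + G *m b)%:R) * n by ring.
by rewrite [n^-1 * _]mulrC mulfK.
Qed.

Lemma sgn2_cases x : sgn2 x = 1 \/ sgn2 x = -1.
Proof. rewrite /sgn2; case: ifP => _; by [left|right]. Qed.

Lemma bad0 (s : bool) (x : algC) : (x == (if s then 1 else -1)) = false ->
  (x = 1 \/ x = -1) -> 1 + (if s then 1 else -1) * x = 0.
Proof.
case: s => H [] Hx; rewrite Hx ?eqxx in H * => //.
  all: by rewrite ?mul1r ?mulr1 ?subrr.
Qed.

Theorem lemma3' (M N Q : nat) (G : 'M['F_2]_(Q, M)) (a c : 'cV['F_2]_M)
    (T : {set 'cV['F_2]_M}) :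
  forall s : bool, commuting_pauli_comb (Apm s G a c T).
Proof.
move=> s.
set v := G *m a.
set sg := (if s then 1 else -1 : algC).
pose good z := sgn2 (dot2 z v) == sg.
exists (dimQ Q), (fun l => if good (ket l) then strv v (ket l) else fun _ => PI),
  (fun l => if good (ket l) then fh s G a c T (ket l) / alpha v (ket l) else 0).
split.
  move=> i j.
  case Hi: (good (ket i)); case Hj: (good (ket j)); rewrite ?id_string ?mul1mx ?mulmx1 //.
  apply/matrixP => x y; rewrite !prod_entry !dot2Dr !sgn2D.
  rewrite (eqP Hi) (eqP Hj); ring.
apply/matrixP => x y.
rewrite Apm_entry summxE.
have Ht l : ((if good (ket l) then fh s G a c T (ket l) / alpha v (ket l) else 0) *:
   pauli_string_mx (if good (ket l) then strv v (ket l) else fun _ => PI)) x y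
   = (ket x == ket y + v)%:R * (fh s G a c T (ket l) * sgn2 (dot2 (ket l) (ket y))).
  rewrite mxE; case Hl: (good (ket l)).
    rewrite (@string_entry Q _ v (ket l)) //.
    have Ha := alpha_neq0 v (ket l); field; exact: Ha.
  have H0 : 1 + sg * sgn2 (dot2 (ket l) v) = 0.
    exact: (bad0 Hl (sgn2_cases _)).
  rewrite /fh big1 => [|b _]; last by rewrite -/v -/sg H0 mulr0.
  by rewrite !(mulr0, mul0r).
under eq_bigr => l _ do rewrite Ht.
by rewrite -mulr_sumr (sum_ket (fun z => fh s G a c T z * sgn2 (dot2 z (ket y)))) -fourier.
Qed.

Unset Implicit Arguments.

Theorem lemma3 (M N Q : nat) (G : 'M['F_2]_(Q, M)) (a c : 'cV['F_2]_M)
    (T : {set 'cV['F_2]_M}) :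
  (0 < M)%N -> (0 < N)%N -> (0 < Q)%N -> (N <= M)%N ->
  {in weight_set M N &, injective (fun b => G *m b)} ->
  T \subset weight_set M N ->
  forall s : bool, commuting_pauli_comb (Apm s G a c T).
Proof. move=> _ _ _ _ _ _; exact: lemma3'. Qed.
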